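(* Let $\mathcal{A}=\{H_i=\{v:\langle\alpha_i,v\rangle=0\}:i=1,\dots,m\}$ be a linear hyperplane arrangement in $\mathbb{R}^n$, $U\in\mathrm{Gr}(k,n)$ with $\dim(U\cap T)=l$, and $I\subseteq[m]$. The following are equivalent: (1) $I$ is a basis of the matroid $\mathfrak{M}_{\mathcal{A}}(U)$; (2) $|I|=k-l$ and $\{\beta_i:i\in I\}$ is linearly independent; (3) $|I|=k-l$ and $\bigcap_{i\in I}H_i\in L_U(\mathcal{A})$.
   Context: $\alpha_i\ne0$, $T=\bigcap_{i=1}^mH_i$, $\beta_i$ is the orthogonal projection of $\alpha_i$ onto $U$, and $\mathfrak{M}_{\mathcal{A}}(U)$ is the matroid on $[m]$ with rank function $\operatorname{rk}(I)=\dim\operatorname{span}\{\beta_i:i\in I\}$. $L(\mathcal{A})$ is the set of intersections of subfamilies of $\mathcal{A}$ (including $\mathbb{R}^n$), $L_j(\mathcal{A})$ those of codimension $j$. For $U$ with $\dim(U\cap T)=l$, $L_U(\mathcal{A}):=\{X\in L_{k-l}(\mathcal{A}): X\oplus(U\cap(U^\perp+T^\perp))=\mathbb{R}^n\}$ (equivalently, those $X\in L_{k-l}(\mathcal{A})$ with $\Delta(U\cap(U^\perp+T^\perp))\notin H(X)$, where $\Delta$ denotes Plücker coordinates and $H(X)=\{x\in\mathbb{R}^{\binom{[n]}{k-l}}:\sum_I(-1)^{(k-l)(k-l+1)/2+\sum_{i\in I}i}\Delta_{[n]\setminus I}(X)x_I=0\}$). *)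

(* Defs.v *)
(* Vectors of R^n are row vectors 'rV[R]_n; linear subspaces
   of R^n are represented (as in mxalgebra) by square matrices 'M[R]_n via
   their row spaces, compared with the %MS operations. *)
From HB Require Import structures.
From mathcomp Require Import all_boot all_order all_algebra.
Set Implicit Arguments. Unset Strict Implicit. Unset Printing Implicit Defensive.
Import Order.TTheory GRing.Theory Num.Theory.
Local Open Scope ring_scope.

Section Arr.
Variables (R : realFieldType) (n m : nat).

(* orthogonal complement (standard inner product <u,v> = u *m v^T) *)
Definition perpmx (A : 'M[R]_n) : 'M[R]_n := kermx A^T.

Definition hyp (alpha : 'I_m -> 'rV[R]_n) (i : 'I_m) : 'M[R]_n :=
  kermx (alpha i)^T.

(* intersection of the H_i, i in J  (the whole space for J empty) *)
Definition flat (alpha : 'I_m -> 'rV[R]_n) (J : {set 'I_m}) : 'M[R]_n :=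
  (\bigcap_(i in J) hyp alpha i)%MS.

Definition centre (alpha : 'I_m -> 'rV[R]_n) : 'M[R]_n := flat alpha setT.

Definition oproj (U : 'M[R]_n) (a : 'rV[R]_n) : 'rV[R]_n :=
  a *m proj_mx U (perpmx U).

Definition beta (alpha : 'I_m -> 'rV[R]_n) (U : 'M[R]_n) (i : 'I_m) :=
  oproj U (alpha i).

Definition mrk (alpha : 'I_m -> 'rV[R]_n) (U : 'M[R]_n) (I : {set 'I_m}) : nat :=
  \rank (\sum_(i in I) <<beta alpha U i>>)%MS.

Definition mindep alpha U (I : {set 'I_m}) : bool := mrk alpha U I == #|I|.

Definition mbasis alpha U (I : {set 'I_m}) : Prop :=
  mindep alpha U I /\ forall J : {set 'I_m}, I \proper J -> ~~ mindep alpha U J.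

Definition lin_indep (v : 'I_m -> 'rV[R]_n) (I : {set 'I_m}) : bool :=
  row_free (\matrix_(j < #|I|) v (enum_val j)).

Definition in_Lj (alpha : 'I_m -> 'rV[R]_n) (j : nat) (X : 'M[R]_n) : Prop :=
  (exists J : {set 'I_m}, (X == flat alpha J)%MS) /\ (n - \rank X)%N = j.

Definition in_LU (alpha : 'I_m -> 'rV[R]_n) (U : 'M[R]_n) (X : 'M[R]_n) : Prop :=
  let T := centre alpha in
  let k := \rank U in
  let l := \rank (U :&: T)%MS in
  let W := (U :&: (perpmx U + perpmx T))%MS in
  in_Lj alpha (k - l)%N X /\ (X + W == 1%:M)%MS /\ (X :&: W == (0 : 'M[R]_n))%MS.

End Arr.

(* Main.v *)
Require Import Defs.
From HB Require Import structures.
From mathcomp Require Import all_boot all_order all_algebra zify.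
Set Implicit Arguments. Unset Strict Implicit. Unset Printing Implicit Defensive.
Import Order.TTheory GRing.Theory Num.Theory.
Local Open Scope ring_scope.

Section Gen.
Variables (R : realFieldType) (n : nat).

Lemma orthC p q (A : 'M[R]_(p, n)) (B : 'M[R]_(q, n)) :
  A *m B^T = 0 -> B *m A^T = 0.
Proof. by move=> H; rewrite -[B]trmxK -trmx_mul H trmx0. Qed.

Lemma orth_subl p q r (A : 'M[R]_(p, n)) (B : 'M[R]_(q, n)) (C : 'M[R]_(r, n)) :
  (A <= B)%MS -> B *m C^T = 0 -> A *m C^T = 0.
Proof. by case/submxP=> D -> H; rewrite -mulmxA H mulmx0. Qed.

Lemma orth_subr p q r (A : 'M[R]_(p, n)) (B : 'M[R]_(q, n)) (C : 'M[R]_(r, n)) :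
  (A <= B)%MS -> C *m B^T = 0 -> C *m A^T = 0.
Proof. by move=> sAB H; apply: orthC; apply: orth_subl sAB (orthC H). Qed.

Lemma orth_adds p q r (A : 'M[R]_(p, n)) (B : 'M[R]_(q, n)) (C : 'M[R]_(r, n)) :
  A *m C^T = 0 -> B *m C^T = 0 -> (A + B)%MS *m C^T = 0.
Proof.
move=> HA HB; apply: (orth_subl (B := col_mx A B)); first by rewrite addsmxE.
by rewrite mul_col_mx HA HB col_mx0.
Qed.

Lemma orth_sum (I : finType) (P : pred I) (A_ : I -> 'M[R]_n) r (C : 'M[R]_(r, n)) :
  (forall i, P i -> A_ i *m C^T = 0) -> (\sum_(i | P i) A_ i)%MS *m C^T = 0.
Proof.
move=> H; apply: (big_ind (fun X : 'M[R]_n => X *m C^T = 0)) => //.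
- by rewrite mul0mx.
- by move=> X Y; apply: orth_adds.
Qed.

Lemma perpP p (A : 'M[R]_n) (v : 'M[R]_(p, n)) :
  (v <= perpmx A)%MS = (v *m A^T == 0).
Proof. by rewrite /perpmx sub_kermx. Qed.

Lemma rank_perp (A : 'M[R]_n) : \rank (perpmx A) = (n - \rank A)%N.
Proof. by rewrite /perpmx mxrank_ker mxrank_tr. Qed.

Lemma selforth0 p (M : 'M[R]_(p, n)) : M *m M^T = 0 -> M = 0.
Proof.
move=> H; apply/matrixP => i j; rewrite mxE.
have : (M *m M^T) i i = 0 by rewrite H mxE.
rewrite mxE => H2.
have Hn : forall k, xpredT k -> 0 <= M i k * M^T k i.
  by move=> k _; rewrite mxE -expr2 sqr_ge0.
have := @psumr_eq0P _ _ xpredT (fun k => M i k * M^T k i) Hn H2 j isT.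
by rewrite mxE => /eqP; rewrite mulf_eq0 orbb => /eqP.
Qed.

Lemma cap_perp0 (A : 'M[R]_n) : (A :&: perpmx A)%MS = 0.
Proof.
apply: selforth0; apply: (orth_subr (B := A)); first exact: capmxSl.
have := capmxSr A (perpmx A); rewrite perpP => /eqP //.
Qed.

Lemma rank_sum_le (I : finType) (J : {set I}) (v : I -> 'rV[R]_n) :
  (\rank (\sum_(i in J) <<v i>>)%MS <= #|J|)%N.
Proof.
rewrite -sum1_card.
apply: (big_ind2 (fun (A : 'M[R]_n) (c : nat) => \rank A <= c)%N).
- by rewrite mxrank0.
- move=> A a B b HA HB; apply: leq_trans (leq_add HA HB).
  by rewrite mxrank_adds_leqif.
- by move=> i _; rewrite mxrank_gen rank_leq_row.
Qed.

Lemma lin_indepE (m : nat) (v : 'I_m -> 'rV[R]_n) (J : {set 'I_m}) :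
  lin_indep v J = (\rank (\sum_(i in J) <<v i>>)%MS == #|J|).
Proof.
rewrite /lin_indep /row_free; congr (_ == _).
apply/eqP; rewrite eqn_leq !mxrankS //.
- apply/sumsmx_subP => i Hi; rewrite genmxE.
  have -> : v i = row (enum_rank_in Hi i) (\matrix_(j0 < #|J|) v (enum_val j0)).
    by apply/rowP => k; rewrite !mxE enum_rankK_in.
  exact: row_sub.
- apply/row_subP => j.
  have -> : row j (\matrix_(j0 < #|J|) v (enum_val j0)) = v (enum_val j).
    by apply/rowP => k; rewrite !mxE.
  by apply: (sumsmx_sup (enum_val j)); rewrite ?enum_valP ?genmxE.
Qed.

End Gen.
Section Spec.
Variables (R : realFieldType) (n m : nat) (alpha : 'I_m -> 'rV[R]_n) (U : 'M[R]_n).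

Local Notation T := (centre alpha).
Local Notation W := (U :&: (perpmx U + perpmx (centre alpha)))%MS.
Local Notation bt := (beta alpha U).
Local Notation Sb J := (\sum_(i in J) <<beta alpha U i>>)%MS.

Lemma perp_self (A : 'M[R]_n) : perpmx A *m A^T = 0.
Proof. by apply/eqP; rewrite -perpP submx_refl. Qed.

Lemma full_UperpU : row_full (U + perpmx U)%MS.
Proof.
rewrite /row_full; have := mxrank_sum_cap U (perpmx U).
rewrite cap_perp0 mxrank0 rank_perp addn0 => ->.
by rewrite subnKC ?rank_leq_col.
Qed.

Lemma beta_subU i : (bt i <= U)%MS.
Proof. exact: proj_mx_sub. Qed.

Lemma beta_compl i : (alpha i - bt i <= perpmx U)%MS.
Proof. by apply: proj_mx_compl_sub; apply: submx_full full_UperpU. Qed.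

Lemma orth_beta p (u : 'M[R]_(p, n)) i :
  (u <= U)%MS -> u *m (bt i)^T = u *m (alpha i)^T.
Proof.
move=> sU; have H1 : (alpha i - bt i) *m U^T = 0 by apply/eqP; rewrite -perpP beta_compl.
have := orthC (orth_subr sU H1).
by rewrite linearB /= mulmxBr => /eqP; rewrite subr_eq0 => /eqP.
Qed.

Lemma T_sub_hyp i : (T <= hyp alpha i)%MS.
Proof. by apply: (bigcapmx_inf i). Qed.

Lemma alpha_perpT i : (alpha i <= perpmx T)%MS.
Proof.
rewrite perpP; apply/eqP; apply: orthC; apply/eqP.
by have := T_sub_hyp i; rewrite /hyp sub_kermx.
Qed.

Lemma beta_subW i : (bt i <= W)%MS.
Proof.
rewrite sub_capmx beta_subU /=.
have -> : bt i = (bt i - alpha i) + alpha i by rewrite subrK.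
apply: addmx_sub_adds; last exact: alpha_perpT.
by rewrite -opprB eqmx_opp beta_compl.
Qed.

Lemma Sb_subW (J : {set 'I_m}) : (Sb J <= W)%MS.
Proof. by apply/sumsmx_subP => i _; rewrite genmxE beta_subW. Qed.

Lemma rankW : \rank W = (\rank U - \rank (U :&: T))%N.
Proof.
have e1 : \rank (perpmx U :&: perpmx T)%MS = \rank (perpmx (U + T)%MS).
  apply/eqP; rewrite eqn_leq !mxrankS //.
  - rewrite sub_capmx !perpP; apply/andP; split; apply/eqP.
      by apply: (orth_subr (addsmxSl U T)); apply: perp_self.
    by apply: (orth_subr (addsmxSr U T)); apply: perp_self.
  - rewrite perpP; apply/eqP; apply: orthC; apply: orth_adds.
      by apply: orthC; apply: (orth_subl (capmxSl _ _)); apply: perp_self.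
    by apply: orthC; apply: (orth_subl (capmxSr _ _)); apply: perp_self.
have c1 := mxrank_sum_cap (perpmx U) (perpmx T).
have c2 := mxrank_sum_cap U T.
have c3 := mxrank_sum_cap U (perpmx U + perpmx T)%MS.
have f1 : \rank (U + (perpmx U + perpmx T))%MS = n.
  apply/eqP; rewrite eqn_leq rank_leq_col /= -{1}(eqP full_UperpU) mxrankS //.
  by rewrite addsmxS ?addsmxSl.
move: e1 c1 c2 c3 f1; rewrite !rank_perp.
have := rank_leq_col (U + T)%MS; have := rank_leq_col U; have := rank_leq_col T.
lia.
Qed.

Lemma subW_perp (S : 'M[R]_n) :
  (\rank S < \rank W)%N -> (0 < \rank (W :&: perpmx S))%N.
Proof.
move=> H; have c := mxrank_sum_cap W (perpmx S).
have := rank_leq_col (W + perpmx S)%MS; have := rank_leq_col S.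
move: c; rewrite rank_perp; lia.
Qed.

Lemma orthSb (J : {set 'I_m}) p (w : 'M[R]_(p, n)) i :
  (w <= perpmx (Sb J))%MS -> i \in J -> w *m (bt i)^T = 0.
Proof.
rewrite perpP => /eqP H Hi; apply: orth_subr H.
by apply: (sumsmx_sup i) => //; rewrite genmxE.
Qed.

Lemma sub_flat (J : {set 'I_m}) p (w : 'M[R]_(p, n)) :
  (w <= U)%MS -> (forall i, i \in J -> w *m (bt i)^T = 0) ->
  (w <= flat alpha J)%MS.
Proof.
move=> sU H; apply/sub_bigcapmxP => i Hi.
by rewrite /hyp sub_kermx -orth_beta // H.
Qed.

Lemma WT0 p (w : 'M[R]_(p, n)) : (w <= W)%MS -> (w <= T)%MS -> w = 0.
Proof.
move=> sW sT; apply: selforth0.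
have sUw : (w <= U)%MS by apply: submx_trans sW (capmxSl _ _).
have sQ : (w <= perpmx U + perpmx T)%MS by apply: submx_trans sW (capmxSr _ _).
apply: (orth_subl sQ); apply: orth_adds.
  by apply: (orth_subr sUw); apply: perp_self.
by apply: (orth_subr sT); apply: perp_self.
Qed.

Lemma Kall (S : 'M[R]_n) :
  (forall j, bt j <= S)%MS -> (W :&: perpmx S)%MS = 0.
Proof.
move=> H; set w := (W :&: perpmx S)%MS.
have sW : (w <= W)%MS by apply: capmxSl.
have sU : (w <= U)%MS by apply: submx_trans sW (capmxSl _ _).
apply: WT0 => //; apply/sub_bigcapmxP => j _.
rewrite /hyp sub_kermx -orth_beta //; apply/eqP; apply: orth_subr (H j) _.
by apply/eqP; rewrite -perpP capmxSr.
Qed.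

End Spec.

Theorem lemma3p3 (R : realFieldType) (n m k l : nat)
  (alpha : 'I_m -> 'rV[R]_n) (U : 'M[R]_n) (I : {set 'I_m}) :
  (forall i, alpha i != 0) ->
  \rank U = k ->
  \rank (U :&: centre alpha)%MS = l ->
  (mbasis alpha U I <-> (#|I| = k - l)%N /\ lin_indep (beta alpha U) I) /\
  ((#|I| = k - l)%N /\ lin_indep (beta alpha U) I <->
     (#|I| = k - l)%N /\ in_LU alpha U (flat alpha I)).
Proof.
move=> _ hk hl; subst k l.
rewrite -rankW.
set W := (U :&: (perpmx U + perpmx (centre alpha)))%MS.
set Sb := fun J : {set 'I_m} => (\sum_(i in J) <<beta alpha U i>>)%MS.
have rle J : (\rank (Sb J) <= #|J|)%N by apply: rank_sum_le.
have rW J : (\rank (Sb J) <= \rank W)%N by apply: mxrankS; apply: Sb_subW.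
have SbS (J1 J2 : {set 'I_m}) : J1 \subset J2 -> (Sb J1 <= Sb J2)%MS.
  move=> /subsetP H; apply/sumsmx_subP => i Hi.
  by apply: (sumsmx_sup i) => //; apply: H.
split.
  rewrite /mbasis /mindep /mrk lin_indepE -/(Sb I); split.
    move=> [HI Hmax]; split => //.
    apply/eqP; rewrite -(eqP HI) eqn_leq rW /= leqNgt; apply/negP => Hlt.
    have Hpos := @subW_perp _ _ _ alpha U (Sb I) Hlt.
    case: (boolP [forall j, beta alpha U j <= Sb I]%MS) => [/forallP Hall | ].
      by move: Hpos; rewrite (Kall Hall) mxrank0.
    move/forallPn => [j Hj].
    have jI : j \notin I.
      apply/negP => jI; move: Hj; rewrite (sumsmx_sup j) //; by rewrite genmxE.
    have Hp : I \proper (j |: I).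
      rewrite properE subsetUr /=; apply/subsetPn; exists j => //.
      by rewrite setU11.
    have := Hmax _ Hp; rewrite /mrk -/(Sb (j |: I)) cardsU1 jI /=.
    have Hlt2 : (\rank (Sb I) < \rank (Sb (j |: I)))%N.
      apply: rank_ltmx; rewrite ltmxE SbS ?subsetUr //=.
      apply/negP => H; move: Hj; rewrite (submx_trans _ H) //.
      by apply: (sumsmx_sup j); rewrite ?setU11 ?genmxE.
    have := rle (j |: I); rewrite cardsU1 jI /= => Hle.
    move: Hlt2 Hle; rewrite (eqP HI) => H1 H2 /negP; apply.
    by apply/eqP/anti_leq; rewrite H2.
  move=> [Hc HI]; split => // J HJ; apply/negP => HJi.
  have := proper_card HJ; have := rW J; rewrite (eqP HJi) Hc; lia.
rewrite /in_LU /=.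
set X := flat alpha I.
rewrite -/W.
split; move=> [Hc HI]; split => //.
- rewrite lin_indepE -/(Sb I) in HI.
  have eW : (W <= Sb I)%MS.
    by rewrite -(mxrank_leqif_sup (Sb_subW _ _ I)).2 (eqP HI) Hc.
  have sXh i : i \in I -> (X <= hyp alpha i)%MS by move=> Hi; apply: (bigcapmx_inf i).
  have cap0 : (X :&: W)%MS = 0.
    set w := (X :&: W)%MS.
    have sW : (w <= W)%MS by apply: capmxSr.
    have sU : (w <= U)%MS by apply: submx_trans sW (capmxSl _ _).
    have sX : (w <= X)%MS by apply: capmxSl.
    apply: selforth0; apply: (orth_subl (submx_trans sW eW)).
    apply: orth_sum => i Hi; apply: (orth_subl (B := beta alpha U i)); first by rewrite genmxE.
    apply: orthC.
    rewrite orth_beta //; apply/eqP; rewrite -sub_kermx.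
    exact: submx_trans sX (sXh i Hi).
  set Sa := (\sum_(i in I) <<alpha i>>)%MS.
  have rSa : \rank Sa = #|I|.
    apply/eqP; rewrite eqn_leq rank_sum_le /= -{1}(eqP HI).
    apply: leq_trans (mxrankM_maxl Sa (proj_mx U (perpmx U))).
    apply: mxrankS; apply/sumsmx_subP => i Hi; rewrite genmxE.
    rewrite /beta /oproj submxMr //.
    by apply: (sumsmx_sup i); rewrite ?genmxE.
  have rX : \rank X = (n - #|I|)%N.
    rewrite -rSa -rank_perp; apply/eqP; rewrite eqn_leq !mxrankS //.
    + apply/sub_bigcapmxP => i Hi; rewrite /hyp sub_kermx.
      apply/eqP; apply: (orth_subr _ (perp_self Sa)).
      by apply: (sumsmx_sup i); rewrite ?genmxE.
    + rewrite perpP; apply/eqP; apply: orthC; apply: orth_sum => i Hi.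
      apply: (orth_subl (B := alpha i)); first by rewrite genmxE.
      apply: orthC; apply/eqP.
      by rewrite -sub_kermx sXh.
  have hIn : (#|I| <= n)%N by rewrite -rSa rank_leq_col.
  rewrite -rankW -/W -/X.
  split; [split; [by exists I; rewrite !submx_refl | by rewrite rX -Hc subKn] |].
  split; last by rewrite cap0 submx_refl.
  rewrite submx1 /=; apply: submx_full; rewrite /row_full.
  have := mxrank_sum_cap X W; rewrite cap0 mxrank0 rX -Hc addn0 => ->.
  by rewrite subnK.
- move: HI => [_ [_ Hcap]]; rewrite lin_indepE -/(Sb I).
  apply/eqP/eqP; rewrite eqn_leq rle /= leqNgt; apply/negP => Hlt.
  have := subW_perp (alpha := alpha) (U := U) (S := Sb I); rewrite -/W -Hc.
  move=> /(_ Hlt); set w := (W :&: perpmx (Sb I))%MS => Hpos.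
  have sW : (w <= W)%MS by apply: capmxSl.
  have sU : (w <= U)%MS by apply: submx_trans sW (capmxSl _ _).
  have sX : (w <= X)%MS.
    apply: (@sub_flat _ _ _ alpha U) => // i Hi; apply: (@orthSb _ _ _ alpha U I) => //.
    exact: capmxSr.
  have : (w <= (0 : 'M[R]_n))%MS.
    move/andP: Hcap => [Hc0 _]; apply: submx_trans Hc0.
    by rewrite sub_capmx sX.
  by move/mxrankS; rewrite mxrank0 leqn0 => /eqP H0; move: Hpos; rewrite H0.
Qed.
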